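(* For every finite simple undirected graph $G$ and every nonnegative integer $k$, $\chi(\mathsf{TS}_k(G)) \leq \chi(J(\chi(G), k))$.
   Context: $\chi(H)$ is the chromatic number of $H$ (zero for the graph with no vertices). A $k$-clique is a set of $k$ pairwise adjacent vertices. $\mathsf{TS}_k(G)$ is the graph whose vertices are the $k$-cliques of $G$, two $k$-cliques $C, C'$ being adjacent iff there are vertices $u,v$ with $C \setminus C' = \{u\}$, $C' \setminus C = \{v\}$ and $uv \in E(G)$. The Johnson graph $J(n,k)$ has as vertices the $k$-element subsets of an $n$-element set, two being adjacent iff their intersection has exactly $k-1$ elements. *)

(* Defs.v *)
From mathcomp Require Import all_boot.
Set Implicit Arguments. Unset Strict Implicit. Unset Printing Implicit Defensive.

Definition colourable (V : finType) (adj : rel V) (c : nat) : bool :=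
  [exists f : {ffun V -> 'I_c}, [forall x, forall y, adj x y ==> (f x != f y)]].

(* Chromatic number: least c (<= #|V|) such that the graph is c-colourable.
   For loopless graphs such a c always exists (c = #|V|); the graph with no
   vertices has chromatic number 0. *)
Definition chi (V : finType) (adj : rel V) : nat :=
  find (colourable adj) (iota 0 #|V|.+1).

Definition simple_graph (T : finType) (e : rel T) : Prop :=
  symmetric e /\ irreflexive e.

Definition is_clique (T : finType) (e : rel T) (C : {set T}) : bool :=
  [forall x in C, forall y in C, (x != y) ==> e x y].

Definition kclique (T : finType) (e : rel T) (k : nat) (C : {set T}) : bool :=
  is_clique e C && (#|C| == k).

Definition TSvert (T : finType) (e : rel T) (k : nat) : finType :=
  {C : {set T} | kclique e k C}.

Definition TSadj (T : finType) (e : rel T) (k : nat) : rel (TSvert e k) :=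
  fun C C' => [exists u : T, exists v : T,
    [&& val C :\: val C' == [set u], val C' :\: val C == [set v] & e u v]].

Definition Jvert (n k : nat) : finType := {S : {set 'I_n} | #|S| == k}.

Definition Jadj (n k : nat) : rel (Jvert n k) :=
  fun S S' => #|val S :&: val S'|.+1 == k.

(* Main.v *)
Require Import Defs.
From mathcomp Require Import all_boot.

Lemma col_card (V : finType) (adj : rel V) : irreflexive adj -> colourable adj #|V|.
Proof.
move=> irr; apply/existsP; exists [ffun x => enum_rank x].
apply/forallP=> x; apply/forallP=> y; apply/implyP=> Hxy.
rewrite !ffunE; apply/negP=> /eqP/enum_rank_inj Exy.
by move: Hxy; rewrite Exy irr.
Qed.

Lemma chi_le_aux (V : finType) (adj : rel V) d :
  colourable adj d -> d <= #|V| -> chi adj <= d.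
Proof.
move=> Hd Hle; rewrite leqNgt; apply/negP=> Hlt.
have := before_find 0 Hlt; rewrite nth_iota ?add0n ?Hd //.
Qed.

Lemma chi_le (V : finType) (adj : rel V) d :
  irreflexive adj -> colourable adj d -> chi adj <= d.
Proof.
move=> irr Hd; case: (leqP d #|V|) => H; first exact: chi_le_aux.
apply: leq_trans (ltnW H); apply: chi_le_aux => //; exact: col_card.
Qed.

Lemma chi_col (V : finType) (adj : rel V) :
  irreflexive adj -> colourable adj (chi adj).
Proof.
move=> irr.
have Hh : has (colourable adj) (iota 0 #|V|.+1).
  apply/hasP; exists #|V|; last exact: col_card.
  by rewrite mem_iota add0n ltnSn.
have := nth_find 0 Hh; rewrite nth_iota ?add0n //.
by rewrite -[X in _ < X](size_iota 0) -has_find.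
Qed.

Theorem proposition3p3 (T : finType) (e : rel T) (k : nat) :
  simple_graph e ->
  chi (@TSadj T e k) <= chi (@Jadj (chi e) k).
Proof.
case=> esym eirr.
set c := chi e.
set d := chi (@Jadj c k).
have Jirr : irreflexive (@Jadj c k).
  by move=> S; rewrite /Jadj setIid (eqP (valP S)) eqn_leq ltnn.
have TSirr : irreflexive (@TSadj T e k).
  move=> C; apply/negbTE/negP; rewrite /TSadj /= => /existsP [u] /existsP [v] /and3P[/eqP H _ _].
  by move: H; rewrite setDv => /setP/(_ u); rewrite in_set0 in_set1 eqxx.
have /existsP[f /forallP fP] := @chi_col _ _ eirr.
have /existsP[g /forallP gP] := @chi_col _ _ Jirr.
have fpr : forall x y, e x y -> f x != f y.
  by move=> x y Hxy; have /forallP/(_ y)/implyP := fP x; apply.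
have gpr : forall x y, Jadj x y -> g x != g y.
  by move=> x y Hxy; have /forallP/(_ y)/implyP := gP x; apply.
have clq : forall (C : TSvert e k) x y, x \in val C -> y \in val C -> x != y -> e x y.
  move=> C x y Hx Hy Hne; have /andP[/forallP/(_ x) H _] := valP C.
  by move: H => /implyP/(_ Hx)/forallP/(_ y)/implyP/(_ Hy)/implyP/(_ Hne).
have injC : forall C : TSvert e k, {in val C &, injective f}.
  move=> C x y Hx Hy Hf; apply/eqP; apply/negP=> /negP Hne.
  by move: (fpr _ _ (clq C x y Hx Hy Hne)); rewrite Hf eqxx.
have cardf : forall C : TSvert e k, #|f @: val C| == k.
  move=> C; rewrite card_in_imset; last exact: injC.
  by have /andP[_ ->] := valP C.
pose F (C : TSvert e k) : Jvert c k := Sub (f @: val C) (cardf C).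
apply: chi_le => //; apply/existsP; exists [ffun C => g (F C)].
apply/forallP=> C; apply/forallP=> C'; apply/implyP=> Hadj.
rewrite !ffunE; apply: gpr.
move: Hadj; rewrite /TSadj /= => /existsP [u] /existsP [v] /and3P[/eqP Hu /eqP Hv Huv].
rewrite /Jadj /F /=.
have key : forall a b, a \in val C -> b \in val C' -> f a = f b -> a = b.
  move=> a b Ha Hb Hf; apply/eqP; apply/negP=> /negP Hne.
  case Ha' : (a \in val C').
    by move: (fpr _ _ (clq C' a b Ha' Hb Hne)); rewrite Hf eqxx.
  case Hb' : (b \in val C).
    by move: (fpr _ _ (clq C a b Ha Hb' Hne)); rewrite Hf eqxx.
  have Eu : a = u.
    by apply/set1P; rewrite -Hu in_setD Ha' Ha.
  have Ev : b = v.
    by apply/set1P; rewrite -Hv in_setD Hb' Hb.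
  by move: (fpr _ _ Huv); rewrite -Eu -Ev Hf eqxx.
have EI : f @: val C :&: f @: val C' = f @: (val C :&: val C').
  apply/setP=> y; apply/idP/idP.
    case/setIP=> /imsetP[a Ha ->] /imsetP[b Hb Hab].
    by apply/imsetP; exists a => //; rewrite inE Ha (key a b Ha Hb Hab) Hb.
  case/imsetP=> a /setIP[Ha Hb] ->.
  by rewrite inE !imset_f.
rewrite EI card_in_imset; last first.
  by move=> x y /setIP[Hx _] /setIP[Hy _]; apply: (injC C).
have /andP[_ /eqP HC] := valP C.
apply/eqP; apply: etrans HC; rewrite -(cardsID (val C') (val C)).
by move: Hu; rewrite /= => ->; rewrite cards1 addn1.
Qed.
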